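(* Let $\{\epsilon_k\}$ be the sequence of penalty-barrier parameters produced by Algorithm LOG-DFL (defined in the context). Then $\lim_{k\to\infty}\epsilon_k=0$.
   Context: Problem data: $f:\mathbb{R}^n\to\mathbb{R}$, $g:\mathbb{R}^n\to\mathbb{R}^m$, $h:\mathbb{R}^n\to\mathbb{R}^q$ continuously differentiable; $l,u\in\mathbb{R}^n$ with $l<u$; $X=\{x: l\le x\le u\}$; $S_<=\{x: g(x)<0\}$; there is $x_0\in X\cap S_<$. Fix $\nu>1$. For $\epsilon>0$, $P(x;\epsilon)=f(x)-\epsilon\sum_{j=1}^m\log(-g_j(x))+\frac1\epsilon\sum_{j=1}^q|h_j(x)|^\nu$ if $x\in S_<$, and $P(x;\epsilon)=+\infty$ otherwise. $e^i$ is the $i$-th unit coordinate vector. Expansion Step$(\hat\alpha,y,p,\gamma)$ with parameter $\delta\in(0,1)$ (using the current parameter $\epsilon_k$): let $b$ be the largest $\beta\ge0$ with $y+\beta p\in X$; set $\alpha\leftarrow\hat\alpha$; repeat: $\check\alpha\leftarrow\min\{b,\alpha/\delta\}$; if $y+\check\alpha p\notin S_<$ return $\alpha$; else if $P(y+\check\alpha p;\epsilon_k)\le P(y;\epsilon_k)-\gamma\check\alpha^2$ set $\alpha\leftarrow\check\alpha$ and return if $\check\alpha=b$, else repeat; otherwise return $\alpha$. Algorithm LOG-DFL (parameters $\epsilon_0>0,\gamma>0,\theta\in(0,1),p>1,\delta\in(0,1)$, $\tilde\alpha_0^i>0$, $d_0^i=e^i$): for $k=0,1,\dots$: Step 1: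 set $y_k^1=x_k$. For $i=1,\dots,n$: (a) choose $\hat\alpha\in[0,\tilde\alpha_k^i]$ with $y_k^i+\hat\alpha d_k^i\in S_<\cap X$; if $\hat\alpha>0$ and $P(y_k^i+\hat\alpha d_k^i;\epsilon_k)\le P(y_k^i;\epsilon_k)-\gamma\hat\alpha^2$, let $\alpha_k^i$ be the output of the Expansion Step$(\hat\alpha,y_k^i,d_k^i,\gamma)$ and set $\tilde\alpha_{k+1}^i=\alpha_k^i$, $d_{k+1}^i=d_k^i$; (b) otherwise do the same with $-d_k^i$ in place of $d_k^i$, and on success set $\tilde\alpha_{k+1}^i=\alpha_k^i$, $d_{k+1}^i=-d_k^i$; (c) if neither succeeds set $\alpha_k^i=0$, $d_{k+1}^i=d_k^i$, $\tilde\alpha_{k+1}^i=\theta\tilde\alpha_k^i$. Then $y_k^{i+1}=y_k^i+\alpha_k^i d_{k+1}^i$. Step 2: let $(g_{\min})_k=\min_{i=1,\dots,n+1,\ \ell=1,\dots,m}|g_\ell(y_k^i)|$; if $\max_{i=1,\dots,n}\max\{\tilde\alpha_k^i,\alpha_k^i\}\le\min\{\epsilon_k^p,(g_{\min})_k^2\}$ set $\epsilon_{k+1}=\theta\epsilon_k$, else $\epsilon_{k+1}=\epsilon_k$. Step 3: choose any $x_{k+1}\in S_<\cap X$ with $P(x_{k+1};\epsilon_k)\le P(y_k^{n+1};\epsilon_k)$. *)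

(* Defs.v *)
From HB Require Import structures.
From mathcomp Require Import all_boot all_order all_algebra.
From mathcomp Require Import all_classical all_reals all_analysis.
Set Implicit Arguments. Unset Strict Implicit. Unset Printing Implicit Defensive.
Import Order.TTheory GRing.Theory Num.Theory.
Import numFieldNormedType.Exports.
Local Open Scope classical_set_scope.
Local Open Scope ring_scope.

(* Continuously differentiable: differentiable everywhere, and every
   directional derivative x |-> 'd F x v is continuous in x (in finite
   dimension this is continuity of x |-> 'd F x). *)
Definition C1 (R : realType) (V W : normedModType R) (F : V -> W) : Prop :=
  (forall x, differentiable F x) /\ (forall v : V, continuous (fun x => 'D_v F x)).

Definition inX (R : realType) (n : nat) (l u : 'rV[R]_n) (x : 'rV[R]_n) : Prop :=
  forall i : 'I_n, l ord0 i <= x ord0 i <= u ord0 i.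

Definition inS (R : realType) (n m : nat) (g : 'rV[R]_n -> 'rV[R]_m)
  (x : 'rV[R]_n) : bool := [forall j : 'I_m, g x ord0 j < 0].

Definition Pfun (R : realType) (n m q : nat) (f : 'rV[R]_n -> R)
  (g : 'rV[R]_n -> 'rV[R]_m) (h : 'rV[R]_n -> 'rV[R]_q) (nu eps : R)
  (x : 'rV[R]_n) : \bar R :=
  if inS g x then
    (f x - eps * (\sum_(j < m) ln (- g x ord0 j))
         + eps^-1 * (\sum_(j < q) (`|h x ord0 j| `^ nu)))%:E
  else +oo%E.

Definition is_max_step (R : realType) (n : nat) (l u y p : 'rV[R]_n) (b : R) : Prop :=
  [/\ 0 <= b, inX l u (y + b *: p) &
      forall beta, 0 <= beta -> inX l u (y + beta *: p) -> beta <= b].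

Definition suff_decr (R : realType) (n : nat) (Pk : 'rV[R]_n -> \bar R)
    (gamma : R) (y z : 'rV[R]_n) (a : R) : Prop :=
  (Pk z <= Pk y - (gamma * a ^+ 2)%:E)%E.

(* The repeat-loop of the Expansion Step: [expand_loop ... a r] means that
   the loop entered with current value alpha = a returns r. Pk = P(.;eps_k),
   S = membership in S_<, b = maximal feasible step. *)
Inductive expand_loop (R : realType) (n : nat) (Pk : 'rV[R]_n -> \bar R)
    (S : 'rV[R]_n -> bool) (delta gamma b : R) (y p : 'rV[R]_n) : R -> R -> Prop :=
| expand_outside a :
    ~~ S (y + Num.min b (a / delta) *: p) ->
    expand_loop Pk S delta gamma b y p a a
| expand_nodecrease a :
    S (y + Num.min b (a / delta) *: p) ->
    ~ suff_decr Pk gamma y (y + Num.min b (a / delta) *: p) (Num.min b (a / delta)) ->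
    expand_loop Pk S delta gamma b y p a a
| expand_reach_b a :
    Num.min b (a / delta) = b ->
    S (y + Num.min b (a / delta) *: p) ->
    suff_decr Pk gamma y (y + Num.min b (a / delta) *: p) (Num.min b (a / delta)) ->
    expand_loop Pk S delta gamma b y p a b
| expand_continue a r :
    Num.min b (a / delta) <> b ->
    S (y + Num.min b (a / delta) *: p) ->
    suff_decr Pk gamma y (y + Num.min b (a / delta) *: p) (Num.min b (a / delta)) ->
    expand_loop Pk S delta gamma b y p (Num.min b (a / delta)) r ->
    expand_loop Pk S delta gamma b y p a r.

Definition expansion_step (R : realType) (n : nat) (l u : 'rV[R]_n)
    (Pk : 'rV[R]_n -> \bar R) (S : 'rV[R]_n -> bool) (delta gamma : R)
    (ahat : R) (y p : 'rV[R]_n) (alpha : R) : Prop :=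
  exists b, is_max_step l u y p b /\ expand_loop Pk S delta gamma b y p ahat alpha.

Definition step_success (R : realType) (n : nat) (Pk : 'rV[R]_n -> \bar R)
    (gamma ahat : R) (y dir : 'rV[R]_n) : Prop :=
  0 < ahat /\ suff_decr Pk gamma y (y + ahat *: dir) ahat.

(* Data of the run:
   x k = x_k, eps k = eps_k, ta k i = tilde alpha_k^i, al k i = alpha_k^i,
   d k i = d_k^i, y k i = y_k^{i+1} (i = 0..n, so y k 0 = x_k and y k n = y_k^{n+1}),
   ahp k i / ahm k i = the hat-alpha chosen in Step 1(a) / Step 1(b). *)
Definition logdfl_run (R : realType) (n m q : nat) (f : 'rV[R]_n -> R)
    (g : 'rV[R]_n -> 'rV[R]_m) (h : 'rV[R]_n -> 'rV[R]_q) (l u : 'rV[R]_n)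
    (nu eps0 gamma theta pe delta : R) (ta0 : 'I_n -> R) (x0 : 'rV[R]_n)
    (x : nat -> 'rV[R]_n) (eps : nat -> R) (ta al : nat -> 'I_n -> R)
    (d : nat -> 'I_n -> 'rV[R]_n) (y : nat -> nat -> 'rV[R]_n)
    (ahp ahm : nat -> 'I_n -> R) : Prop :=
  let P := Pfun f g h nu in
  let S := inS g in
  [/\
      [/\ x 0%N = x0, eps 0%N = eps0,
         (forall i, ta 0%N i = ta0 i) &
         (forall i : 'I_n, d 0%N i = delta_mx ord0 i)],
      (forall k, y k 0%N = x k),
      (forall k (i : 'I_n),
        let Y := y k i in let D := d k i in let T := ta k i in
        [/\ [/\ 0 <= ahp k i <= T, inX l u (Y + ahp k i *: D) & S (Y + ahp k i *: D)],
            (step_success (P (eps k)) gamma (ahp k i) Y D ->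
               [/\ expansion_step l u (P (eps k)) S delta gamma (ahp k i) Y D (al k i),
                   ta k.+1 i = al k i & d k.+1 i = D]),
            (~ step_success (P (eps k)) gamma (ahp k i) Y D ->
               [/\ [/\ 0 <= ahm k i <= T, inX l u (Y + ahm k i *: (- D)) &
                   S (Y + ahm k i *: (- D))],
                   (step_success (P (eps k)) gamma (ahm k i) Y (- D) ->
                      [/\ expansion_step l u (P (eps k)) S delta gamma (ahm k i) Y (- D)
                            (al k i),
                          ta k.+1 i = al k i & d k.+1 i = - D]) &
                   (~ step_success (P (eps k)) gamma (ahm k i) Y (- D) ->
                      [/\ al k i = 0, d k.+1 i = D & ta k.+1 i = theta * T])]) &
            y k i.+1 = Y + al k i *: d k.+1 i]),
      (forall k,
        let cond :=
          (forall i : 'I_n, Num.max (ta k i) (al k i) <= eps k `^ pe) /\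
          (forall (i : 'I_n) (i' : 'I_n.+1) (j : 'I_m),
             Num.max (ta k i) (al k i) <= `|g (y k i') ord0 j| ^+ 2) in
        (cond -> eps k.+1 = theta * eps k) /\ (~ cond -> eps k.+1 = eps k)) &
      (forall k, [/\ inX l u (x k.+1), S (x k.+1) &
                    (P (eps k) (x k.+1) <= P (eps k) (y k n))%E])].

(* Main.v *)
Require Import Defs.
From HB Require Import structures.
From mathcomp Require Import all_boot all_order all_algebra.
From mathcomp Require Import all_classical all_reals all_analysis.
From mathcomp Require Import ring lra.
Import Order.TTheory GRing.Theory Num.Theory.
Import numFieldNormedType.Exports.
Local Open Scope classical_set_scope.
Local Open Scope ring_scope.
Lemma segX (R : realType) n (l u Y p : 'rV[R]_n) (b t : R) :
  inX l u Y -> inX l u (Y + b *: p) -> 0 <= t <= b -> inX l u (Y + t *: p).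
Proof.
move=> HY Hb /andP[t0 tb] i; move: (HY i) (Hb i); rewrite !mxE.
move=> /andP[a1 a2] /andP[b1 b2].
have [pp|pn] := lerP 0 (p ord0 i).
- have h1 : 0 <= t * p ord0 i by rewrite mulr_ge0.
  have h2 : t * p ord0 i <= b * p ord0 i by rewrite ler_wpM2r.
  apply/andP; split; lra.
- have h1 : t * p ord0 i <= 0 by rewrite mulr_ge0_le0 // ltW.
  have h2 : b * p ord0 i <= t * p ord0 i by rewrite ler_wnM2r // ltW.
  apply/andP; split; lra.
Qed.

Arguments segX {R n l u Y p b t}.

Lemma loop_ok (R : realType) n (l u : 'rV[R]_n) (Pk : 'rV[R]_n -> \bar R) S (delta gamma b : R)
  (Y p : 'rV[R]_n) a r :
  0 < delta -> 0 <= b -> inX l u Y -> inX l u (Y + b *: p) ->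
  expand_loop Pk S delta gamma b Y p a r ->
  suff_decr Pk gamma Y (Y + a *: p) a -> inX l u (Y + a *: p) -> 0 <= a ->
  suff_decr Pk gamma Y (Y + r *: p) r /\ inX l u (Y + r *: p).
Proof.
move=> d0 b0 XY Xb; elim => {a r}.
- by move=> a _ H1 H2 _.
- by move=> a _ _ H1 H2 _.
- by move=> a E _ H _ _ _; rewrite -E; split => //; rewrite E.
- move=> a r _ _ H _ IH _ _ a0; apply: IH; first exact: H.
  + apply: (segX XY Xb); apply/andP; split; last by rewrite ge_min lexx.
    by rewrite le_min b0 divr_ge0 // ltW.
  + by rewrite le_min b0 divr_ge0 // ltW.
Qed.

Lemma fin_eventually (n : nat) (P : 'I_n -> nat -> Prop) :
  (forall i, exists N, forall j, (N <= j)%N -> P i j) ->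
  exists N, forall i j, (N <= j)%N -> P i j.
Proof.
move=> /choice [F HF]; exists (\max_i F i)%N => i j Hj; apply: HF.
by apply: leq_trans Hj; apply: leq_bigmax.
Qed.

Lemma entry_le_norm (R : realType) m (v : 'rV[R]_m) j : `|v ord0 j| <= `|v|.
Proof.
have -> : `|v| = mx_norm v by [].
by rewrite mx_normrE; apply/bigmax_geP; right => /=; exists (ord0, j).
Qed.

Arguments loop_ok {R n l u Pk S delta gamma b Y p a r}.
Arguments entry_le_norm {R m}.
Lemma X_compact (R : realType) n (l u : 'rV[R]_n) : compact [set x | inX l u x].
Proof.
have -> : [set x | inX l u x] = [set v : 'rV[R]_n | forall i, `[l ord0 i, u ord0 i]%classic (v ord0 i)].
  apply/seteqP; split => v /= H i; move: (H i); by rewrite /= in_itv.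
apply: (@rV_compact _ _ (fun i => `[l ord0 i, u ord0 i]%classic)) => i; exact: segment_compact.
Qed.

Lemma bound_on_X (R : realType) n (V : normedModType R) (F : 'rV[R]_n -> V) (l u : 'rV[R]_n) :
  (forall x, differentiable F x) -> exists M : R, forall x, inX l u x -> `|F x| <= M.
Proof.
move=> dF.
have cF : continuous F by move=> x; exact: differentiable_continuous.
have : compact (F @` [set x | inX l u x]).
  apply: continuous_compact; first exact: continuous_subspaceT.
  exact: X_compact.
move/compact_bounded => [M [_ HM]].
exists (M + 1) => x Xx; apply: (HM (M+1)); first by rewrite ltrDl.
by exists x.
Qed.
Arguments bound_on_X {R n V}.
Arguments fin_eventually {n P}.
Theorem proposition4p1 (R : realType) (n m q : nat)
    (f : 'rV[R]_n -> R) (g : 'rV[R]_n -> 'rV[R]_m) (h : 'rV[R]_n -> 'rV[R]_q)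
    (l u : 'rV[R]_n) (x0 : 'rV[R]_n)
    (nu eps0 gamma theta pe delta : R) (ta0 : 'I_n -> R)
    (x : nat -> 'rV[R]_n) (eps : nat -> R) (ta al : nat -> 'I_n -> R)
    (d : nat -> 'I_n -> 'rV[R]_n) (y : nat -> nat -> 'rV[R]_n)
    (ahp ahm : nat -> 'I_n -> R) :
  C1 f -> C1 g -> C1 h ->
  (forall i : 'I_n, l ord0 i < u ord0 i) ->
  inX l u x0 -> inS g x0 ->
  1 < nu -> 0 < eps0 -> 0 < gamma -> 0 < theta < 1 -> 1 < pe -> 0 < delta < 1 ->
  (forall i, 0 < ta0 i) ->
  logdfl_run f g h l u nu eps0 gamma theta pe delta ta0 x0 x eps ta al d y ahp ahm ->
  eps @ \oo --> 0.
Proof.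
move=> C1f C1g C1h lu Xx0 Sx0 nu1 e0 g0 /andP[th0 th1] pe1 /andP[de0 de1] ta0p run.
case: run => [[x0E eps0E ta0E d0E] y0E stepH epsH xH].
pose Q (E : R) (z : 'rV[R]_n) := f z - E * (\sum_(j < m) ln (- g z ord0 j))
         + E^-1 * (\sum_(j < q) (`|h z ord0 j| `^ nu)).
have PfunE : forall E z, inS g z -> Defs.Pfun f g h nu E z = (Q E z)%:E.
  by move=> E z Sz; rewrite /Defs.Pfun Sz.
have decr : forall E Y z a, inS g Y -> suff_decr (Defs.Pfun f g h nu E) gamma Y z a ->
    inS g z /\ Q E z <= Q E Y - gamma * a ^+ 2.
  move=> E Y z a SY; rewrite /suff_decr (PfunE _ _ SY).
  case Sz: (inS g z); last by rewrite /Defs.Pfun Sz.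
  by rewrite (PfunE _ _ Sz) -EFinB lee_fin.
have step : forall k (i : 'I_n), inX l u (y k i) -> inS g (y k i) ->
    [/\ inX l u (y k i.+1), inS g (y k i.+1) &
        Q (eps k) (y k i.+1) <= Q (eps k) (y k i) - gamma * al k i ^+ 2].
  move=> k i XY SY.
  have [[/andP[hp0 hpT] Xhp Shp] Ha Hnot Hy] := stepH k i.
  case: (pselect (step_success (Defs.Pfun f g h nu (eps k)) gamma (ahp k i) (y k i) (d k i))) => sa.
    have [[b [[b0 Xb _] lp]] _ dE] := Ha sa.
    have [sd Xr] := loop_ok de0 b0 XY Xb lp sa.2 Xhp hp0.
    have [Sr Qr] := decr _ _ _ _ SY sd.
    by rewrite Hy dE.
  have [[/andP[hm0 hmT] Xhm Shm] Hb Hc] := Hnot sa.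
  case: (pselect (step_success (Defs.Pfun f g h nu (eps k)) gamma (ahm k i) (y k i) (- d k i))) => sb.
    have [[b [[b0 Xb _] lp]] _ dE] := Hb sb.
    have [sd Xr] := loop_ok de0 b0 XY Xb lp sb.2 Xhm hm0.
    have [Sr Qr] := decr _ _ _ _ SY sd.
    by rewrite Hy dE.
  have [a0 dE _] := Hc sb.
  by rewrite Hy a0 scale0r addr0 expr0n /= mulr0 subr0.
have yinv : forall k, inX l u (x k) /\ inS g (x k) ->
    forall i, (i <= n)%N -> inX l u (y k i) /\ inS g (y k i).
  move=> k [Xk Sk]; elim => [|i IH] Hi; first by rewrite y0E.
  have [Xi Si] := IH (ltnW Hi).
  by have [] := step k (Ordinal Hi) Xi Si.
have xinv : forall k, inX l u (x k) /\ inS g (x k).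
  elim => [|k IH]; first by rewrite x0E.
  by have [] := xH k.
have yinv' : forall k i, (i <= n)%N -> inX l u (y k i) /\ inS g (y k i).
  by move=> k; apply: yinv.
have stepQ : forall k (i : 'I_n),
    Q (eps k) (y k i.+1) <= Q (eps k) (y k i) - gamma * al k i ^+ 2.
  move=> k i; have [Xi Si] := yinv' k i (ltnW (ltn_ord i)).
  by have [] := step k i Xi Si.
have chain : forall k i j, (i <= j)%N -> (j <= n)%N -> Q (eps k) (y k j) <= Q (eps k) (y k i).
  move=> k i; elim => [|j IH] Hij Hj.
    by move: Hij; rewrite leqn0 => /eqP ->.
  case: (ltngtP i j.+1) Hij => // [Hlt _|-> _]; last by [].
  apply: le_trans (IH Hlt (ltnW Hj)).
  have := stepQ k (Ordinal Hj); rewrite /= => H; apply: le_trans H _.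
  rewrite lerBlDr lerDl; apply: mulr_ge0; [exact: ltW|exact: sqr_ge0].
have xstep : forall k, Q (eps k) (x k.+1) <= Q (eps k) (y k n).
  move=> k; have [_ Sx Px] := xH k.
  have [_ Sy] := yinv' k n (leqnn n).
  by move: Px; rewrite (PfunE _ _ Sx) (PfunE _ _ Sy) lee_fin.
have epos : forall k, 0 < eps k.
  elim => [|k IH]; first by rewrite eps0E.
  have [H1 H2] := epsH k.
  case: (pselect ((forall i : 'I_n, Num.max (ta k i) (al k i) <= eps k `^ pe) /\
    (forall (i : 'I_n) (i' : 'I_n.+1) (j : 'I_m),
     Num.max (ta k i) (al k i) <= `|g (y k i') ord0 j| ^+ 2))) => c.
    by rewrite (H1 c) mulr_gt0.
  by rewrite (H2 c).
have edec : forall k, eps k.+1 <= eps k.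
  move=> k; have [H1 H2] := epsH k.
  case: (pselect ((forall i : 'I_n, Num.max (ta k i) (al k i) <= eps k `^ pe) /\
    (forall (i : 'I_n) (i' : 'I_n.+1) (j : 'I_m),
     Num.max (ta k i) (al k i) <= `|g (y k i') ord0 j| ^+ 2))) => c.
    by rewrite (H1 c) ger_pMl // ltW.
  by rewrite (H2 c).
have emono : forall a b, (a <= b)%N -> eps b <= eps a.
  move=> a b /subnK <-; elim: (b - a)%N => [|t IH]; first by rewrite add0n.
  by rewrite addSn; apply: le_trans (edec _) IH.
pose cond k := (forall i : 'I_n, Num.max (ta k i) (al k i) <= eps k `^ pe) /\
    (forall (i : 'I_n) (i' : 'I_n.+1) (j : 'I_m),
     Num.max (ta k i) (al k i) <= `|g (y k i') ord0 j| ^+ 2).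
have epsH' : forall k, (cond k -> eps k.+1 = theta * eps k) /\ (~ cond k -> eps k.+1 = eps k).
  exact: epsH.
case: (pselect (forall K, exists k, (K <= k)%N /\ cond k)) => [HA|HB].
  have Hpow : forall N, exists k, eps k <= theta ^+ N * eps0.
    elim => [|N [k Hk]]; first by exists 0%N; rewrite eps0E expr0 mul1r.
    have [k' [Hk' ck']] := HA k; exists k'.+1.
    rewrite ((epsH' k').1 ck') exprS -mulrA ler_pM2l //.
    exact: le_trans (emono _ _ Hk') Hk.
  apply/cvgr0Pnorm_lt => e e0'.
  have : `|theta| < 1 by rewrite ger0_norm ?ltW.
  move/cvg_expr/cvgr0Pnorm_lt => /(_ (e / eps0) (divr_gt0 e0' e0)) [N _ HN].
  have [k Hk] := Hpow N.
  exists k => // j /= Hj; rewrite ger0_norm ?ltW //.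
  apply: le_lt_trans (emono _ _ Hj) _; apply: le_lt_trans Hk _.
  have := HN N (leqnn N); rewrite /= ger0_norm ?exprn_ge0 ?ltW // => hh.
  by rewrite -ltr_pdivlMr.
have [K HK] : exists K, forall k, (K <= k)%N -> ~ cond k.
  apply: contrapT => H; apply: HB => K; apply: contrapT => H2; apply: H.
  by exists K => k Hk c; apply: H2; exists k.
pose E := eps K.
have Econst : forall j, eps (K + j)%N = E.
  elim => [|j IH]; first by rewrite addn0.
  by rewrite addnS ((epsH' _).2 (HK _ (leq_addr _ _))).
have Epos : 0 < E := epos K.
have [Mf HMf] := bound_on_X f l u C1f.1.
have [Mg HMg] := bound_on_X g l u C1g.1.
pose G := Mg + 1.
have Gpos : 0 < G by rewrite /G; have := HMg x0 Xx0; have := normr_ge0 (g x0); lra.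
have gle : forall z, inX l u z -> inS g z -> forall j, 0 < - g z ord0 j <= G.
  move=> z Xz Sz j; move/forallP: Sz => /(_ j) gneg.
  have := entry_le_norm (g z) j; have := HMg z Xz.
  rewrite ltr0_norm // /G => h1 h2; apply/andP; split; lra.
pose LG := `|ln G|.
have lnle : forall z j, inX l u z -> inS g z -> ln (- g z ord0 j) <= LG.
  move=> z j Xz Sz; have /andP[a1 a2] := gle z Xz Sz j.
  apply: le_trans (ler_norm _); by rewrite ler_ln ?posrE.
have hge0 : forall z, 0 <= E^-1 * (\sum_(j < q) (`|h z ord0 j| `^ nu)).
  move=> z; apply: mulr_ge0; first by rewrite invr_ge0 ltW.
  by apply: sumr_ge0 => j _; apply: powR_ge0.
have LGge0 : 0 <= LG by apply: normr_ge0.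
pose L := - Mf - E * (m%:R * LG).
have Qlow : forall z, inX l u z -> inS g z -> L <= Q E z.
  move=> z Xz Sz; rewrite /Q /L.
  have hf : - Mf <= f z by have := HMf z Xz; rewrite ler_norml => /andP[].
  have hs : \sum_(j < m) ln (- g z ord0 j) <= m%:R * LG.
    rewrite mulr_natl.
    have -> : LG *+ m = \sum_(j < m) LG by rewrite sumr_const card_ord.
    apply: ler_sum => j _; exact: lnle.
  have hs' : E * (\sum_(j < m) ln (- g z ord0 j)) <= E * (m%:R * LG) by rewrite ler_pM2l.
  have := hge0 z; lra.
have gbound : forall C z j, inX l u z -> inS g z -> Q E z <= C ->
    expR ((- Mf - C - E * (m%:R * LG)) / E) <= - g z ord0 j.
  move=> C z j Xz Sz QC.
  have hf : - Mf <= f z by have := HMf z Xz; rewrite ler_norml => /andP[].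
  have hr : \sum_(l0 < m | l0 != j) ln (- g z ord0 l0) <= m%:R * LG.
    apply: (@le_trans _ _ (\sum_(l0 < m | l0 != j) LG)).
      by apply: ler_sum => l0 _; exact: lnle.
    rewrite mulr_natl.
    have -> : LG *+ m = \sum_(j < m) LG by rewrite sumr_const card_ord.
    rewrite [leRHS](bigD1 j) //=; lra.
  have e1 : \sum_(j0 < m) ln (- g z ord0 j0) = ln (- g z ord0 j) + \sum_(l0 < m | l0 != j) ln (- g z ord0 l0).
    by rewrite (bigD1 j).
  have hr' : E * (\sum_(l0 < m | l0 != j) ln (- g z ord0 l0)) <= E * (m%:R * LG) by rewrite ler_pM2l.
  have := hge0 z; move: QC; rewrite /Q e1 mulrDr => QC h2.
  have key : - Mf - C - E * (m%:R * LG) <= ln (- g z ord0 j) * E by rewrite mulrC; lra.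
  have /andP[a1 _] := gle z Xz Sz j.
  rewrite -[X in _ <= X]lnK ?posrE // ler_expR ler_pdivrMr //.
pose w j := Q E (x (K + j)%N).
have wdec : forall j, w j.+1 <= w j.
  move=> j; rewrite /w addnS -(Econst j).
  apply: le_trans (xstep _) _; rewrite -(y0E (K + j)%N); apply: chain => //.
have wdrop : forall j (i : 'I_n), w j.+1 + gamma * al (K + j)%N i ^+ 2 <= w j.
  move=> j i; rewrite /w addnS -(Econst j).
  have h1 := xstep (K + j)%N.
  have h2 := chain (K + j)%N i.+1 n (ltn_ord i) (leqnn n).
  have h3 := stepQ (K + j)%N i.
  have h4 := chain (K + j)%N 0%N i (leq0n _) (ltnW (ltn_ord i)).
  rewrite y0E in h4; lra.
have wmono : forall a b, (a <= b)%N -> w b <= w a.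
  move=> a b /subnK <-; elim: (b - a)%N => [|t IH]; first by rewrite add0n.
  by rewrite addSn; apply: le_trans (wdec _) IH.
have wlow : forall j, L <= w j.
  by move=> j; have [Xj Sj] := xinv (K + j)%N; apply: Qlow.
pose C := w 0%N.
pose c0 := (- Mf - C - E * (m%:R * LG)) / E.
pose cg := expR c0 ^+ 2.
have cgpos : 0 < cg by rewrite /cg exprn_gt0 // expR_gt0.
have gsq : forall k, (K <= k)%N -> forall (i' : 'I_n.+1) j, cg <= `|g (y k i') ord0 j| ^+ 2.
  move=> k Hk i' j; have Hi' : (i' <= n)%N by rewrite -ltnS.
  have [Xi Si] := yinv' k i' Hi'.
  have QC : Q E (y k i') <= C.
    move: (chain k 0%N i' (leq0n _) Hi'); rewrite y0E -(subnKC Hk) Econst => hq.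
    apply: le_trans hq _; exact: wmono.
  have hb := gbound C (y k i') j Xi Si QC.
  have /andP[a1 _] := gle _ Xi Si j.
  rewrite /cg ltr0_norm; last by lra.
  rewrite !expr2; apply: ler_pM => //; exact: ltW (expR_gt0 _).
have drops : forall e, 0 < e -> exists N, forall j, (N <= j)%N -> w j - w j.+1 <= e.
  move=> e e0'.
  have hinf : has_inf (range w).
    split; first by exists (w 0%N), 0%N.
    by exists L => _ [j _ <-]; apply: wlow.
  have [_ [N _ <-] HN] := inf_adherent e0' hinf.
  exists N => j Hj.
  have h1 : inf (range w) <= w j.+1 by apply: ge_inf; [exact: hinf.2 | exists j.+1].
  have h2 := wmono _ _ Hj; lra.
pose tau := Num.min (E `^ pe) cg.
have taupos : 0 < tau by rewrite /tau lt_min powR_gt0 // cgpos.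
have [N1 HN1] := drops (gamma * tau ^+ 2) (mulr_gt0 g0 (exprn_gt0 2 taupos)).
have alle : forall j, (N1 <= j)%N -> forall i, al (K + j)%N i <= tau.
  move=> j Hj i; have h1 := wdrop j i; have h2 := HN1 j Hj.
  have h3 : gamma * al (K + j)%N i ^+ 2 <= gamma * tau ^+ 2 by lra.
  rewrite ler_pM2l // in h3; move: h3; rewrite !expr2 => h3; nra.
have tacase : forall k i, ta k.+1 i = al k i \/ ta k.+1 i = theta * ta k i.
  move=> k i; have [_ Ha Hnot _] := stepH k i.
  case: (pselect (step_success (Defs.Pfun f g h nu (eps k)) gamma (ahp k i) (y k i) (d k i))) => sa.
    by have [_ -> _] := Ha sa; left.
  have [_ Hb Hc] := Hnot sa.
  case: (pselect (step_success (Defs.Pfun f g h nu (eps k)) gamma (ahm k i) (y k i) (- d k i))) => sb.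
    by have [_ -> _] := Hb sb; left.
  by have [_ _ ->] := Hc sb; right.
have tabound : forall t i, ta (K + N1 + t)%N i <= tau \/
    ta (K + N1 + t)%N i <= theta ^+ t * `|ta (K + N1)%N i|.
  elim => [|t IH] i; first by right; rewrite addn0 expr0 mul1r ler_norm.
  rewrite addnS; case: (tacase (K + N1 + t)%N i) => ->.
    by left; rewrite -addnA; apply: alle; rewrite leq_addr.
  case: (IH i) => H; first by left; nra.
  by right; rewrite exprS -mulrA ler_pM2l.
have tev : forall i, exists T, forall t, (T <= t)%N -> theta ^+ t * `|ta (K + N1)%N i| <= tau.
  move=> i; pose A := `|ta (K + N1)%N i|.
  have A0 : 0 <= A by apply: normr_ge0.
  have : `|theta| < 1 by rewrite ger0_norm ?ltW.
  move/cvg_expr/cvgr0Pnorm_lt => /(_ (tau / (A + 1))) [].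
    by rewrite divr_gt0 // ltr_wpDl.
  move=> T _ HT; exists T => t Ht; have hh := HT t Ht; simpl in hh.
  have tp : 0 <= theta ^+ t by apply: exprn_ge0; apply: ltW.
  rewrite ger0_norm // in hh.
  have A1 : 0 < A + 1 by rewrite ltr_wpDl.
  rewrite ltr_pdivlMr // in hh.
  have : theta ^+ t * A <= theta ^+ t * (A + 1) by rewrite ler_wpM2l // lerDl.
  rewrite -/A; lra.
have [T HT] := fin_eventually tev.
pose k := (K + N1 + T)%N.
have Ek : eps k = E by rewrite /k -addnA Econst.
have mx : forall i, Num.max (ta k i) (al k i) <= tau.
  move=> i; rewrite ge_max; apply/andP; split.
    by case: (tabound T i) => // hh; apply: le_trans hh (HT i T (leqnn T)).
  by rewrite /k -addnA; apply: alle; rewrite leq_addr.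
have Hk : (K <= k)%N by rewrite /k -addnA leq_addr.
exfalso; apply: (HK k Hk).
split.
  by move=> i; rewrite Ek; apply: le_trans (mx i) _; rewrite /tau ge_min lexx.
move=> i i' j; apply: le_trans (mx i) _; apply: le_trans (gsq k _ i' j).
  by rewrite /tau ge_min lexx orbT.
exact: Hk.
Qed.
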